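(* Let $G=(V,E)$ be a connected edge-transitive graph that is not vertex-transitive, with minimum degree $\delta$ and maximum degree $\Delta$. If $\delta\geq 4$, or $\delta=3$ and $\Delta\geq 6$, then $|E|>2|V|-3$. If $\delta\leq 3$ and $\Delta\leq 5$, then either $|E|\leq 2|V|-3$, or $G$ is isomorphic to one of $K_{3,4}$, $K_{3,5}$, $H_{6,10}$.
   Context: All graphs are finite and simple. Vertex-transitive / edge-transitive: the automorphism group acts transitively on vertices / edges. $K_{a,b}$ is the complete bipartite graph. $H_{6,10}$ is the bipartite graph on vertex set $\{0,\dots,15\}$ with parts $\{0,\dots,5\}$ and $\{6,\dots,15\}$ and adjacency: $0:\{6,8,9,10,15\}$, $1:\{7,9,10,12,13\}$, $2:\{6,8,11,12,13\}$, $3:\{6,7,10,11,14\}$, $4:\{9,11,12,14,15\}$, $5:\{7,8,13,14,15\}$. *)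

(* Defs.v *)
From mathcomp Require Import all_boot fingroup perm.
Set Implicit Arguments. Unset Strict Implicit. Unset Printing Implicit Defensive.

Section Graphs.
Variable T : finType.
Variable e : rel T.

Definition simple_graph : Prop := symmetric e /\ irreflexive e.

Definition is_aut (f : {perm T}) : Prop := forall x y, e (f x) (f y) = e x y.

Definition vertex_transitive : Prop :=
  forall x y : T, exists f : {perm T}, is_aut f /\ f x = y.

Definition edge_transitive : Prop :=
  forall x y u v : T, e x y -> e u v ->
    exists f : {perm T}, is_aut f /\ [set f x; f y] = [set u; v].

Definition connected_graph : Prop := forall x y : T, connect e x y.

Definition deg (x : T) : nat := #|[set y | e x y]|.

(* minimum and maximum degree (for nonempty T; degrees are < #|T|) *)
Definition mindeg : nat := \big[minn/#|T|]_(x : T) deg x.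
Definition maxdeg : nat := \max_(x : T) deg x.

Definition edges : {set {set T}} :=
  [set A : {set T} | [exists x, exists y, (A == [set x; y]) && e x y]].

End Graphs.

Definition graph_iso (T T' : finType) (e : rel T) (e' : rel T') : Prop :=
  exists f : T -> T', bijective f /\ forall x y, e' (f x) (f y) = e x y.

Definition Kbip (a b : nat) : rel 'I_(a + b) :=
  fun i j => (i < a) != (j < a).

Definition H610_nbr (i : nat) : seq nat :=
  match i with
  | 0 => [:: 6; 8; 9; 10; 15]
  | 1 => [:: 7; 9; 10; 12; 13]
  | 2 => [:: 6; 8; 11; 12; 13]
  | 3 => [:: 6; 7; 10; 11; 14]
  | 4 => [:: 9; 11; 12; 14; 15]
  | 5 => [:: 7; 8; 13; 14; 15]
  | _ => [::]
  end.

Definition H610 : rel 'I_16 :=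
  fun i j => (nat_of_ord j \in H610_nbr i) || (nat_of_ord i \in H610_nbr j).
Arguments Kbip : clear implicits.

(* Main.v *)
Require Import Defs.
From mathcomp Require Import all_boot fingroup perm.
From mathcomp Require Import zify.
Set Implicit Arguments. Unset Strict Implicit. Unset Printing Implicit Defensive.

Definition trl : seq (seq nat) := [:: [:: 0; 1; 2]; [:: 0; 1; 3]; [:: 0; 1; 4]; [:: 0; 1; 5]; [:: 0; 2; 3]; [:: 0; 2; 4]; [:: 0; 2; 5]; [:: 0; 3; 4]; [:: 0; 3; 5]; [:: 0; 4; 5]; [:: 1; 2; 3]; [:: 1; 2; 4]; [:: 1; 2; 5]; [:: 1; 3; 4]; [:: 1; 3; 5]; [:: 1; 4; 5]; [:: 2; 3; 4]; [:: 2; 3; 5]; [:: 2; 4; 5]; [:: 3; 4; 5]].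

Definition table : seq (seq nat * seq nat) := [:: ([:: 0; 1; 2; 3; 4; 5], [:: 4; 14; 6; 2; 1; 16; 11; 12; 19; 9]);
 ([:: 0; 1; 2; 3; 5; 4], [:: 4; 13; 5; 3; 1; 17; 12; 11; 19; 9]);
 ([:: 0; 1; 2; 4; 3; 5], [:: 5; 15; 6; 1; 2; 16; 10; 12; 19; 8]);
 ([:: 0; 1; 2; 4; 5; 3], [:: 5; 13; 4; 3; 2; 18; 12; 10; 19; 8]);
 ([:: 0; 1; 2; 5; 3; 4], [:: 6; 15; 5; 1; 3; 17; 10; 11; 19; 7]);
 ([:: 0; 1; 2; 5; 4; 3], [:: 6; 14; 4; 2; 3; 18; 11; 10; 19; 7]);
 ([:: 0; 1; 3; 2; 4; 5], [:: 4; 12; 8; 2; 0; 16; 13; 14; 18; 9]);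
 ([:: 0; 1; 3; 2; 5; 4], [:: 4; 11; 7; 3; 0; 17; 14; 13; 18; 9]);
 ([:: 0; 1; 3; 4; 2; 5], [:: 7; 15; 8; 0; 2; 16; 10; 14; 18; 6]);
 ([:: 0; 1; 3; 5; 2; 4], [:: 8; 15; 7; 0; 3; 17; 10; 13; 18; 5]);
 ([:: 0; 1; 4; 2; 3; 5], [:: 5; 12; 9; 1; 0; 16; 13; 15; 17; 8]);
 ([:: 0; 1; 4; 3; 2; 5], [:: 7; 14; 9; 0; 1; 16; 11; 15; 17; 6])].

Definition memt (i k : nat) : bool := i \in nth [::] trl k.
Definition cdeg (bs : seq bool) (i : nat) : nat :=
  sumn [seq nat_of_bool (nth false bs k && memt i k) | k <- iota 0 20].
Definition clam (bs : seq bool) (i j : nat) : nat :=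
  sumn [seq nat_of_bool (nth false bs k && memt i k && memt j k) | k <- iota 0 20].
Definition csl (bs : seq bool) (i k : nat) : nat :=
  sumn [seq (memt j k && (j != i)) * clam bs i j | j <- iota 0 6].
Definition flags : seq (nat * nat) :=
  flatten [seq [seq (i, k) | i <- iota 0 6 & memt i k] | k <- iota 0 20].
Definition sconst (bs : seq bool) : bool :=
  let vals := [seq csl bs p.1 p.2 | p <- flags & nth false bs p.2] in
  all (eq_op (head 0 vals)) vals.
Definition good (bs : seq bool) (pk : seq nat * seq nat) : bool :=
  let (p, k) := pk in
  [&& all (fun i => all (fun j => ((6 + j) \in H610_nbr i) == (nth 0 p i \in nth [::] trl (nth 0 k j))) (iota 0 10)) (iota 0 6),
      all (fun j => nth false bs (nth 0 k j)) (iota 0 10),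
      uniq k, all (fun x => x < 20) k, size k == 10,
      uniq p, all (fun x => x < 6) p & size p == 6].
Definition disj_ok (bs : seq bool) : bool :=
  all (fun k => all (fun k' => (nth false bs k && nth false bs k') ==>
        ((k == k') || ~~ has (fun i => memt i k && memt i k') (iota 0 6))) (iota 0 20)) (iota 0 20).
Definition okp (D : nat) (s : seq bool) : bool :=
  let m := 20 - size s in
  all (fun i => let p := sumn [seq nat_of_bool (nth false s j && memt i (m + j)) | j <- iota 0 (size s)] in
                (p <= D) && (D <= p + count (memt i) (iota 0 m))) (iota 0 6).

Fixpoint srch (D : nat) (P : seq bool -> bool) (n : nat) (acc : seq bool) : bool :=
  match n with
  | 0 => P acc
  | n'.+1 => if (if okp D (true :: acc) then srch D P n' (true :: acc) else true)
             then (if okp D (false :: acc) then srch D P n' (false :: acc) else true) else false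
  end.

Definition P5 (s : seq bool) : bool := if sconst s then has (good s) table else true.

Lemma srchP D P n acc : srch D P n acc ->
  forall t, size t = n -> (forall m, m < n -> okp D (drop m t ++ acc)) -> P (t ++ acc).
Proof.
elim: n acc => [|n IH] acc /=.
  by move=> H [|//] _ _.
move=> H t; case/lastP: t => [//|t b]; rewrite size_rcons => -[Ht] Hok.
have Hb : okp D (b :: acc).
  by have := Hok n (ltnSn n); rewrite -cats1 drop_cat Ht ltnn subnn drop0.
have Hs : srch D P n (b :: acc).
  have [H1 H2] : (if okp D (true :: acc) then srch D P n (true :: acc) else true) /\
                 (if okp D (false :: acc) then srch D P n (false :: acc) else true).
    by move: H; case: (if okp D (true :: acc) then _ else _).
  by case: b Hb {Hok} => Hb; [move: H1 | move: H2]; rewrite Hb.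
rewrite -cats1 -catA /=; apply (IH _ Hs t Ht) => m Hm.
have := Hok m (ltnW Hm); rewrite -cats1 drop_cat Ht Hm -catA //.
Qed.

Lemma check5 : srch 5 P5 20 [::].
Proof. vm_compute. reflexivity. Qed.
Lemma check1 : srch 1 disj_ok 20 [::].
Proof. vm_compute. reflexivity. Qed.

Fixpoint allbits (n : nat) (P : seq bool -> bool) : bool :=
  match n with
  | 0 => P [::]
  | n'.+1 => if allbits n' (fun s => P (true :: s)) then allbits n' (fun s => P (false :: s)) else false
  end.

Lemma allbitsP n P : allbits n P -> forall s, size s = n -> P s.
Proof.
elim: n P => [|n IH] P /=; first by move=> HP [].
move=> H [|b s] //= [Hs]; move: H; case: ifP => // H1 H2; case: b.
- exact: (IH _ H1).
- exact: (IH _ H2).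
Qed.

Definition tri_ok (s : seq bool) : bool :=
  if count id s == 3 then [seq i <- iota 0 6 | nth false s i] \in trl else true.
Lemma tri_check : allbits 6 tri_ok.
Proof. vm_compute. reflexivity. Qed.
Lemma trl_uniq : uniq trl.
Proof. vm_compute. reflexivity. Qed.
Lemma trl_size : size trl = 20.
Proof. by []. Qed.

Definition Hnat (i j : nat) : bool :=
  if i < 6 then (if j < 6 then false else j \in H610_nbr i)
  else if j < 6 then i \in H610_nbr j else false.
Lemma H610_nat_b : all (fun i => all (fun j => ((j \in H610_nbr i) || (i \in H610_nbr j)) == Hnat i j) (iota 0 16)) (iota 0 16).
Proof. vm_compute. reflexivity. Qed.


Lemma aut1 (T : finType) (e : rel T) : is_aut e 1.
Proof. by move=> x y; rewrite !perm1. Qed.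

Lemma autM (T : finType) (e : rel T) f g : is_aut e f -> is_aut e g -> is_aut e (f * g).
Proof. by move=> Hf Hg x y; rewrite !permM Hg Hf. Qed.

Lemma autV (T : finType) (e : rel T) f : is_aut e f -> is_aut e f^-1.
Proof. by move=> Hf x y; rewrite -Hf !permKV. Qed.

Lemma deg_aut (T : finType) (e : rel T) f v : is_aut e f -> deg e (f v) = deg e v.
Proof.
move=> Hf; rewrite /deg -(card_imset [set y | e v y] (@perm_inj _ f)).
congr (#|pred_of_set _|).
apply/setP=> y; rewrite !inE; apply/idP/imsetP.
- by move=> H; exists ((f^-1)%g y); rewrite ?inE ?permKV // -Hf permKV.
- by case=> z; rewrite inE => Hz ->; rewrite Hf.
Qed.

Record setup (T : finType) (e : rel T) (A : {set T}) (dA dB : nat) : Prop := Setup {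
  s_sym : symmetric e;
  s_irr : irreflexive e;
  s_cross : forall u v, e u v -> (u \in A) = (v \notin A);
  s_degA : forall a, a \in A -> deg e a = dA;
  s_degB : forall b, b \notin A -> deg e b = dB;
  s_flag : forall a a' b b', a \in A -> a' \in A -> e a b -> e a' b' ->
             exists f, is_aut e f /\ f a = a' /\ f b = b';
  s_conn : connected_graph e;
  s_neA : exists a, a \in A;
  s_neB : exists b, b \notin A
}.

Lemma crossA T e A dA dB (S : @setup T e A dA dB) u v : e u v -> u \in A -> v \notin A.
Proof. by move=> H; rewrite (s_cross S H). Qed.
Lemma crossB T e A dA dB (S : @setup T e A dA dB) u v : e u v -> u \notin A -> v \in A.
Proof. by move=> H; rewrite (s_cross S H) negbK. Qed.

Lemma setup_swap T e A dA dB : @setup T e A dA dB -> setup e (~: A) dB dA.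
Proof.
move=> S; case: (S) => sy ir cr dga dgb fl co [a Ha] [b Hb]; split=> //.
- by move=> u v /cr; rewrite !inE => ->; rewrite negbK.
- by move=> x; rewrite inE; apply: dgb.
- by move=> x; rewrite inE negbK; apply: dga.
- move=> b1 b2 a1 a2; rewrite !inE => Hb1 Hb2 H1 H2.
  have Ha1 := crossB S H1 Hb1; have Ha2 := crossB S H2 Hb2.
  rewrite sy in H1; rewrite sy in H2.
  have [f [Hf [E1 E2]]] := fl _ _ _ _ Ha1 Ha2 H1 H2.
  by exists f.
- by exists b; rewrite inE.
- by exists a; rewrite inE negbK.
Qed.


Definition is_autb (T : finType) (e : rel T) (f : {perm T}) :=
  [forall x, [forall y, e (f x) (f y) == e x y]].
Lemma is_autP (T : finType) (e : rel T) f : reflect (is_aut e f) (is_autb e f).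
Proof.
apply: (iffP forallP) => H.
- by move=> x y; move/forallP: (H x) => /(_ y) /eqP.
- by move=> x; apply/forallP => y; rewrite H.
Qed.

Lemma derive_setup (T : finType) (e : rel T) :
  simple_graph e -> connected_graph e -> edge_transitive e -> ~ vertex_transitive e ->
  exists A dA dB, @setup T e A dA dB.
Proof.
move=> [sy ir] co et nvt.
have [x0 _] : exists x0 : T, True.
  case: (pickP (@predT T)) => [x _|H]; first by exists x.
  by exfalso; apply: nvt => x; have := H x.
have nbr : forall v, exists w, e v w.
  move=> v; case: (boolP [exists w, e v w]) => [/existsP //|/existsPn Hn].
  exfalso; apply: nvt => x y.
  have H1 : forall w, connect e v w -> w = v.
    move=> w /connectP [p Hp ->]; case: p Hp => [//|z p] /= /andP [Hz _].
    by have := Hn z; rewrite Hz.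
  exists 1%g; split; first exact: aut1.
  by rewrite perm1 (H1 x (co v x)) (H1 y (co v y)).
have [y0 Hxy] := nbr x0.
pose A := [set v | [exists f, is_autb e f && (f x0 == v)]].
pose Bo := [set v | [exists f, is_autb e f && (f y0 == v)]].
have inA : forall f, is_aut e f -> f x0 \in A.
  by move=> f Hf; rewrite inE; apply/existsP; exists f; rewrite eqxx andbT; apply/is_autP.
have inB : forall f, is_aut e f -> f y0 \in Bo.
  by move=> f Hf; rewrite inE; apply/existsP; exists f; rewrite eqxx andbT; apply/is_autP.
have inAP : forall v, v \in A -> exists f, is_aut e f /\ f x0 = v.
  by move=> v; rewrite inE => /existsP [f /andP [/is_autP Hf /eqP E]]; exists f.
have inBP : forall v, v \in Bo -> exists f, is_aut e f /\ f y0 = v.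
  by move=> v; rewrite inE => /existsP [f /andP [/is_autP Hf /eqP E]]; exists f.
have autA : forall f v, is_aut e f -> v \in A -> f v \in A.
  move=> f v Hf /inAP [g [Hg <-]]; rewrite -permM; exact: inA (autM Hg Hf).
have cover : forall v, (v \in A) || (v \in Bo).
  move=> v; have [w Hvw] := nbr v.
  have [f [Hf E]] := et _ _ _ _ Hxy Hvw.
  have : v \in [set f x0; f y0] by rewrite E !inE eqxx.
  rewrite !in_set2 => /orP [/eqP ->|/eqP ->]; first by rewrite (inA f Hf).
  by rewrite (inB f Hf) ?orbT.
have disj : forall v, v \in A -> v \in Bo -> False.
  move=> v /inAP [f [Hf Ef]] /inBP [g [Hg Eg]].
  have allA : forall u, u \in A.
    move=> u; case/orP: (cover u) => // /inBP [h [Hh <-]].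
    have -> : h y0 = (f * g^-1 * h)%g x0 by rewrite !permM Ef -Eg permK.
    by apply: inA; apply: autM (autM Hf (autV Hg)) Hh.
  apply: nvt => u w.
  have [p [Hp <-]] := inAP _ (allA u); have [q [Hq <-]] := inAP _ (allA w).
  by exists (p^-1 * q)%g; split; [apply: autM (autV Hp) Hq | rewrite permM permK].
have nA : forall v, (v \notin A) = (v \in Bo).
  move=> v; case: (boolP (v \in A)) => Hv /=; last by move: (cover v); rewrite (negbTE Hv).
  by apply/esym/negP => Hb; apply: disj Hv Hb.
have cross : forall u v, e u v -> (u \in A) = (v \notin A).
  move=> u v Huv; have [f [Hf E]] := et _ _ _ _ Hxy Huv.
  have hu : u \in [set f x0; f y0] by rewrite E !inE eqxx.
  have hv : v \in [set f x0; f y0] by rewrite E !inE eqxx orbT.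
  move: hu hv; rewrite !in_set2 => /orP [/eqP Hu|/eqP Hu] /orP [/eqP Hv|/eqP Hv]; subst u v.
  - by rewrite ir in Huv.
  - by rewrite nA (inA f Hf) (inB f Hf).
  - by rewrite (inA f Hf); apply/negbTE; rewrite nA (inB f Hf).
  - by rewrite ir in Huv.
exists A, (deg e x0), (deg e y0); split=> //.
- by move=> a /inAP [f [Hf <-]]; rewrite deg_aut.
- by move=> b; rewrite nA => /inBP [f [Hf <-]]; rewrite deg_aut.
- move=> a a' b b' Ha Ha' Hab Hab'.
  have [f [Hf E]] := et _ _ _ _ Hab Hab'.
  have hb' : b' \notin A by rewrite -(cross _ _ Hab').
  have hfa : f a \in [set a'; b'] by rewrite -E !inE eqxx.
  have hfb : f b \in [set a'; b'] by rewrite -E !inE eqxx orbT.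
  have Efa : f a = a'.
    move: hfa; rewrite !in_set2 => /orP [/eqP //|/eqP Eq].
    by move: hb'; rewrite -Eq autA.
  exists f; split=> //; split=> //.
  move: hfb; rewrite !in_set2 => /orP [/eqP Eq|/eqP //].
  by move: Hab; rewrite -Efa in Eq; rewrite (perm_inj Eq) ir.
- by exists x0; rewrite -[x0](@perm1 T x0) (inA 1%g (aut1 e)).
- by exists y0; rewrite nA -[y0](@perm1 T y0) (inB 1%g (aut1 e)).
Qed.


Lemma edges_count T e A dA dB : @setup T e A dA dB -> #|edges e| = #|A| * dA.
Proof.
move=> S.
pose P := [set p : T * T | (p.1 \in A) && e p.1 p.2].
have -> : edges e = [set [set p.1; p.2] | p in P].
  apply/setP=> X; rewrite /edges inE; apply/existsP/imsetP.
  - case=> x /existsP [y /andP [/eqP -> Hxy]].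
    case: (boolP (x \in A)) => Hx.
      by exists (x, y) => //; rewrite inE /= Hx.
    exists (y, x); first by rewrite inE /= (crossB S Hxy Hx) (s_sym S).
    by rewrite /= setUC.
  - case=> [[x y]]; rewrite inE /= => /andP [Hx Hxy] ->.
    by exists x; apply/existsP; exists y; rewrite eqxx.
rewrite card_in_imset; last first.
  move=> [x y] [x' y']; rewrite !inE /= => /andP [Hx Hxy] /andP [Hx' Hxy'] E.
  have Hy := crossA S Hxy Hx; have Hy' := crossA S Hxy' Hx'.
  have : x \in [set x'; y'] by rewrite -E !inE eqxx.
  rewrite in_set2 => /orP [/eqP Ex|/eqP Ex]; last by move: Hy'; rewrite -Ex Hx.
  subst x'.
  have : y \in [set x; y'] by rewrite -E !inE eqxx orbT.
  rewrite in_set2 => /orP [/eqP Ey|/eqP -> //].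
  by rewrite Ey (s_irr S) in Hxy.
rewrite -sum1_card big_mkcond /=.
rewrite (eq_bigr (fun p : T * T => (fun a b => if (a, b) \in P then 1 else 0) p.1 p.2)); last by move=> [a b].
rewrite -(pair_bigA _ (fun a b => if (a, b) \in P then 1 else 0)) /=.
rewrite (eq_bigr (fun a => if a \in A then dA else 0)); last first.
  move=> a _; case: (boolP (a \in A)) => Ha.
    rewrite -(s_degA S Ha) /deg -sum1_card [in RHS]big_mkcond /=.
    by apply: eq_bigr => b _; rewrite !inE /= Ha.
  by rewrite big1 // => b _; rewrite inE /= (negbTE Ha).
by rewrite -big_mkcond /= sum_nat_const.
Qed.


Lemma deg_val T e A dA dB (S : @setup T e A dA dB) v : deg e v = dA \/ deg e v = dB.
Proof. by case: (boolP (v \in A)) => Hv; [left; apply: s_degA S _ Hv | right; apply: s_degB S _ Hv]. Qed.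

Lemma bigmin_le_seq (I : eqType) (r : seq I) x0 (F : I -> nat) v :
  v \in r -> \big[minn/x0]_(i <- r) F i <= F v.
Proof.
elim: r => // w r IH; rewrite inE big_cons => /orP [/eqP ->|H]; first exact: geq_minl.
exact: leq_trans (geq_minr _ _) (IH H).
Qed.

Lemma minmax_deg T e A dA dB : @setup T e A dA dB ->
  mindeg e = minn dA dB /\ maxdeg e = maxn dA dB.
Proof.
move=> S; have [a Ha] := s_neA S; have [b Hb] := s_neB S.
have dAa := s_degA S Ha; have dBb := s_degB S Hb.
split.
- apply/eqP; rewrite eqn_leq; apply/andP; split.
  + rewrite leq_min; apply/andP; split.
    * by rewrite /mindeg -dAa; apply: bigmin_le_seq; rewrite mem_index_enum.
    * by rewrite /mindeg -dBb; apply: bigmin_le_seq; rewrite mem_index_enum.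
  + rewrite /mindeg; apply: (big_ind (fun m => minn dA dB <= m)).
    * by rewrite -dAa; apply: leq_trans (geq_minl _ _) (max_card _).
    * by move=> x y Hx Hy; rewrite leq_min Hx Hy.
    * move=> v _; case: (deg_val S v) => ->; [exact: geq_minl | exact: geq_minr].
- apply/eqP; rewrite eqn_leq; apply/andP; split.
  + apply/bigmax_leqP => v _; case: (deg_val S v) => ->; [exact: leq_maxl | exact: leq_maxr].
  + rewrite geq_max; apply/andP; split.
    * by rewrite -dAa; apply: leq_bigmax.
    * by rewrite -dBb; apply: leq_bigmax.
Qed.

Lemma deg_le_other T e A dA dB (S : @setup T e A dA dB) : dA <= #|~: A|.
Proof.
have [a Ha] := s_neA S; rewrite -(s_degA S Ha) /deg; apply: subset_leq_card.
by apply/subsetP => y; rewrite !inE => /(crossA S) ->.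
Qed.

Lemma degA_pos T e A dA dB (S : @setup T e A dA dB) : 0 < dA.
Proof.
have [a Ha] := s_neA S; have [b Hb] := s_neB S.
rewrite -(s_degA S Ha) /deg card_gt0; apply/set0Pn.
have /connectP [p Hp Hl] := s_conn S a b.
case: p Hp Hl => [|z p] /=; first by move=> _ E; move: Hb; rewrite E Ha.
by case/andP => Hz _ _; exists z; rewrite inE.
Qed.


Lemma iso_of_inj (T T' : finType) (e : rel T) (e' : rel T') (g : T' -> T) :
  injective g -> #|T| <= #|T'| -> (forall i j, e (g i) (g j) = e' i j) -> graph_iso e e'.
Proof.
move=> gi hc he; have [g' gK g'K] := inj_card_bij gi hc.
exists g'; split; first by exists g.
by move=> x y; rewrite -he !g'K.
Qed.

Lemma complete_bip T e A dA dB (S : @setup T e A dA dB) a b :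
  dB = #|A| -> a \in A -> b \notin A -> e b a.
Proof.
move=> hd Ha Hb.
have Hs : [set y | e b y] \subset A by apply/subsetP => y; rewrite inE => /(crossB S) ->.
have Hc : #|[set y | e b y]| = #|A| by rewrite -hd -(s_degB S Hb).
by move: (subset_cardP Hc Hs a); rewrite inE Ha.
Qed.

Lemma Kbip_iso T e A dA dB (S : @setup T e A dA dB) m n :
  #|~: A| = m -> #|A| = n -> dB = n -> graph_iso e (Kbip m n).
Proof.
move=> hm hn hd; have [x0 _] := s_neA S.
pose g (i : 'I_(m + n)) := if i < m then nth x0 (enum (~: A)) i else nth x0 (enum A) (i - m).
have gB : forall i : 'I_(m + n), i < m -> g i \notin A.
  move=> i Hi; rewrite /g Hi; have : nth x0 (enum (~: A)) i \in enum (~: A).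
    by apply: mem_nth; rewrite -cardE hm.
  by rewrite mem_enum inE.
have gA : forall i : 'I_(m + n), ~~ (i < m) -> g i \in A.
  move=> i Hi; rewrite /g (negbTE Hi); have : nth x0 (enum A) (i - m) \in enum A.
    by apply: mem_nth; rewrite -cardE hn; have := ltn_ord i; lia.
  by rewrite mem_enum.
apply: (@iso_of_inj _ _ e _ g).
- move=> i j E; apply: val_inj => /=.
  case: (boolP (i < m)) => Hi; case: (boolP (j < m)) => Hj.
  + move: E; rewrite /g Hi Hj => /eqP; rewrite nth_uniq ?enum_uniq -?cardE ?hm // => /eqP //.
  + by move: (gB _ Hi); rewrite E gA.
  + by move: (gB _ Hj); rewrite -E gA.
  + move: E; rewrite /g (negbTE Hi) (negbTE Hj) => /eqP.
    rewrite nth_uniq ?enum_uniq -?cardE ?hn //; try (have := ltn_ord i; have := ltn_ord j; lia).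
- by rewrite card_ord -hm -hn addnC cardsC.
- move=> i j; rewrite /Kbip.
  case: (boolP (i < m)) => Hi; case: (boolP (j < m)) => Hj /=.
  + by apply/negbTE/negP => /(crossB S) /(_ (gB _ Hi)); rewrite (negbTE (gB _ Hj)).
  + by apply: (complete_bip S) => //; [rewrite hd | apply: gA | apply: gB].
  + by rewrite (s_sym S); apply: (complete_bip S) => //; [rewrite hd | apply: gA | apply: gB].
  + by apply/negbTE/negP => /(crossA S) /(_ (gA _ Hi)); rewrite gA.
Qed.


Lemma sum_card_nat (T : finType) (A : {set T}) (Q : pred T) :
  \sum_(a in A) (Q a : nat) = #|[set a in A | Q a]|.
Proof.
rewrite -sum1_card big_mkcond [RHS]big_mkcond /=; apply: eq_bigr => a _.
by rewrite !inE; case: (a \in A); case: (Q a).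
Qed.

Lemma sumn_big (I : Type) (s : seq I) (F : I -> nat) : sumn [seq F k | k <- s] = \sum_(k <- s) F k.
Proof. by rewrite sumnE big_map. Qed.

Lemma count_sum (I : Type) (f : pred I) (s : seq I) : count f s = \sum_(i <- s) (f i : nat).
Proof. by elim: s => [|x s IH]; rewrite ?big_nil ?big_cons //= IH. Qed.

Lemma sumn_and_le (f g : pred nat) s :
  sumn [seq (f k && g k : nat) | k <- s] <= count g s.
Proof. elim: s => //= x s IH; case: (f x); case: (g x) => /=; lia. Qed.

Lemma okp_drop D s : size s = 20 -> (forall i, i < 6 -> cdeg s i = D) ->
  forall m, m < 20 -> okp D (drop m s).
Proof.
move=> Hs Hd m Hm; rewrite /okp size_drop Hs.
have -> : 20 - (20 - m) = m by lia.
apply/allP => i; rewrite mem_iota => /andP [_ Hi].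
have Ep : sumn [seq (nth false (drop m s) j && memt i (m + j) : nat) | j <- iota 0 (20 - m)] =
          sumn [seq (nth false s k && memt i k : nat) | k <- iota m (20 - m)].
  rewrite (_ : iota m (20 - m) = map (addn m) (iota 0 (20 - m))); last by rewrite -iotaDl addn0.
  rewrite -map_comp; congr sumn; apply: eq_map => j /=; by rewrite nth_drop.
have Ed : D = sumn [seq (nth false s k && memt i k : nat) | k <- iota 0 m] +
              sumn [seq (nth false s k && memt i k : nat) | k <- iota m (20 - m)].
  rewrite -(Hd i Hi) /cdeg -sumn_cat -map_cat.
  rewrite (_ : iota m (20 - m) = iota (0 + m) (20 - m)) // -iotaD; congr (sumn (map _ (iota 0 _))); lia.
have Hq := sumn_and_le (fun k => nth false s k) (memt i) (iota 0 m).
rewrite Ep; apply/andP; split; lia.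
Qed.

Section Hsec.
Variables (T : finType) (e : rel T) (A : {set T}).
Hypothesis S : setup e A 3 5.
Hypothesis hB6 : #|~: A| = 6.
Hypothesis hA10 : #|A| = 10.
Variable x0 : T.
Hypothesis Hx0 : x0 \in A.

Definition beta (n : nat) : T := nth x0 (enum (~: A)) n.

Lemma size_enumB : size (enum (~: A)) = 6.
Proof. by rewrite -cardE hB6. Qed.

Lemma betaB n : n < 6 -> beta n \notin A.
Proof.
move=> Hn; have : beta n \in enum (~: A) by apply: mem_nth; rewrite size_enumB.
by rewrite mem_enum inE.
Qed.

Lemma beta_inj n m : n < 6 -> m < 6 -> beta n = beta m -> n = m.
Proof.
move=> Hn Hm /eqP; rewrite /beta nth_uniq ?enum_uniq ?size_enumB //; by move/eqP.
Qed.

Lemma beta_onto b : b \notin A -> exists2 n, n < 6 & beta n = b.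
Proof.
move=> Hb; have Hb' : b \in enum (~: A) by rewrite mem_enum inE.
by exists (index b (enum (~: A))); [rewrite -size_enumB index_mem | rewrite /beta nth_index].
Qed.

Lemma enumB_eq : enum (~: A) = [seq beta i | i <- iota 0 6].
Proof. by rewrite -size_enumB -/(mkseq _ _) mkseq_nth. Qed.

Lemma sum_B (F : T -> nat) : (forall y, y \in A -> F y = 0) ->
  \sum_y F y = \sum_(i <- iota 0 6) F (beta i).
Proof.
move=> H0; rewrite (bigID (fun y => y \in A)) /= big1 // add0n.
rewrite -(big_map beta xpredT) -enumB_eq big_enum /=.
by apply: eq_bigl => y; rewrite inE.
Qed.

Definition Nb (a : T) : seq nat := [seq i <- iota 0 6 | e a (beta i)].

Lemma mem_Nb a i : (i \in Nb a) = (i < 6) && e a (beta i).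
Proof. by rewrite mem_filter mem_iota andbC. Qed.

Lemma deg_sumB v : deg e v = \sum_y (e v y : nat).
Proof.
rewrite /deg -sum1_card big_mkcond; apply: eq_bigr => y _; rewrite inE; by case: (e v y).
Qed.

Lemma degA_count a : a \in A -> count (fun i => e a (beta i)) (iota 0 6) = 3.
Proof.
move=> Ha; rewrite -[RHS](s_degA S Ha) deg_sumB count_sum (sum_B (F := fun y => (e a y : nat))) //.
move=> y Hy; case: (boolP (e a y)) => // /(crossA S) /(_ Ha); by rewrite Hy.
Qed.

Lemma Nb_trl a : a \in A -> Nb a \in trl.
Proof.
move=> Ha.
have := allbitsP tri_check (s := [seq e a (beta i) | i <- iota 0 6]); rewrite size_map size_iota.
move=> /(_ erefl); rewrite /tri_ok count_map (degA_count Ha) eqxx.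
congr (_ \in _); apply: eq_in_filter => i; rewrite mem_iota /= => Hi.
Qed.

Lemma sel_trl s (F : nat -> nat) : s \in trl ->
  \sum_(k <- iota 0 20) (s == nth [::] trl k) * F k = F (index s trl).
Proof.
move=> Hs; have Hj : index s trl \in iota 0 20.
  have := Hs; rewrite -index_mem trl_size mem_iota; lia.
rewrite (bigD1_seq _ Hj (iota_uniq 0 20)) nth_index // eqxx mul1n big_seq_cond big1; first exact: addn0.
move=> k /andP [Hk Hne]; case: eqP => // E; exfalso; move/negP: Hne; apply.
by rewrite E index_uniq ?trl_uniq // trl_size; move: Hk; rewrite mem_iota.
Qed.

Definition xk (k : nat) : nat := #|[set a in A | Nb a == nth [::] trl k]|.

Lemma sum_A (P : seq nat -> nat) :
  \sum_(a in A) P (Nb a) = \sum_(k <- iota 0 20) xk k * P (nth [::] trl k).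
Proof.
rewrite (eq_bigr (fun a => \sum_(k <- iota 0 20) (Nb a == nth [::] trl k) * P (nth [::] trl k))); last first.
  move=> a Ha; rewrite sel_trl ?Nb_trl //; by rewrite nth_index ?Nb_trl.
rewrite exchange_big /=; apply: eq_bigr => k _.
rewrite /xk -sum_card_nat big_distrl /=; apply: eq_bigr => a _; by rewrite eq_sym.
Qed.

Lemma noAA u v : u \in A -> v \in A -> ~~ e u v.
Proof. by move=> Hu Hv; apply/negP => /(crossA S) /(_ Hu); rewrite Hv. Qed.

Lemma Nb_twin y a : y \in A -> a \in A -> Nb y = Nb a -> forall z, e y z = e a z.
Proof.
move=> Hy Ha E z; case: (boolP (z \in A)) => Hz.
  by rewrite (negbTE (noAA Hy Hz)) (negbTE (noAA Ha Hz)).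
have [n Hn <-] := beta_onto Hz.
by have := mem_Nb y n; have := mem_Nb a n; rewrite E Hn /= => <- <-.
Qed.

Lemma Nb_eq_of y a : (forall z, e y z = e a z) -> Nb y = Nb a.
Proof. by move=> H; apply: eq_filter => i; rewrite H. Qed.

Lemma has_nbr a : a \in A -> exists b, e a b.
Proof.
move=> Ha; have := degA_count Ha; move=> Hc.
have : has (fun i => e a (beta i)) (iota 0 6) by rewrite has_count Hc.
by case/hasP => i _ H; exists (beta i).
Qed.

Definition cls a := [set y in A | Nb y == Nb a].

Lemma cls_le a a' : a \in A -> a' \in A -> #|cls a| <= #|cls a'|.
Proof.
move=> Ha Ha'; have [b Hb] := has_nbr Ha; have [b' Hb'] := has_nbr Ha'.
have [f [Hf [E1 E2]]] := s_flag S Ha Ha' Hb Hb'.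
rewrite -(card_imset (cls a) (@perm_inj _ f)); apply: subset_leq_card.
apply/subsetP => z /imsetP [y Hy ->]; move: Hy; rewrite !inE => /andP [Hy /eqP Ey].
have tw := Nb_twin Hy Ha Ey.
have tw' : forall z, e (f y) z = e a' z.
  by move=> w; rewrite -E1 -[w](permKV f) !Hf tw.
have fyA : f y \in A.
  have H : e (f y) b' by rewrite tw'.
  by rewrite (s_cross S H) (crossA S Hb' Ha').
by rewrite fyA /=; apply/eqP; exact: Nb_eq_of tw'.
Qed.

Lemma xk_pos k : 0 < xk k -> exists2 a, a \in A & Nb a = nth [::] trl k.
Proof. by rewrite card_gt0 => /set0Pn [a]; rewrite inE => /andP [Ha /eqP E]; exists a. Qed.

Lemma xk_cls k a : a \in A -> Nb a = nth [::] trl k -> xk k = #|cls a|.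
Proof. by move=> Ha E; rewrite /xk /cls E. Qed.

Lemma xk_const k k' : 0 < xk k -> 0 < xk k' -> xk k = xk k'.
Proof.
move=> /xk_pos [a Ha Ea] /xk_pos [a' Ha' Ea'].
rewrite (xk_cls Ha Ea) (xk_cls Ha' Ea'); apply/eqP; rewrite eqn_leq !cls_le //.
Qed.

Definition c0 := xk (index (Nb x0) trl).

Lemma c0_pos : 0 < c0.
Proof.
rewrite /c0 card_gt0; apply/set0Pn; exists x0; rewrite inE Hx0 andTb nth_index ?eqxx //; exact: Nb_trl Hx0.
Qed.

Lemma xk_c k : xk k = c0 * (0 < xk k).
Proof.
case: (posnP (xk k)) => H; first by rewrite H muln0.
rewrite muln1; apply: xk_const => //; exact: c0_pos.
Qed.

Definition bs := mkseq (fun k => 0 < xk k) 20.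

Lemma nth_bs k : k < 20 -> nth false bs k = (0 < xk k).
Proof. by move=> Hk; rewrite /bs nth_mkseq. Qed.

Lemma size_bs : size bs = 20.
Proof. by rewrite size_mkseq. Qed.

Lemma sum_onA (F : T -> nat) : (forall y, y \notin A -> F y = 0) -> \sum_y F y = \sum_(a in A) F a.
Proof. by move=> H; rewrite (bigID (fun y => y \in A)) /= [X in _ + X]big1 ?addn0. Qed.

Lemma sum_A_bs (P : seq nat -> nat) :
  \sum_(a in A) P (Nb a) = c0 * \sum_(k <- iota 0 20) (nth false bs k : nat) * P (nth [::] trl k).
Proof.
rewrite sum_A big_distrr big_seq [RHS]big_seq; apply: eq_bigr => k; rewrite mem_iota => /andP [_ Hk].
by rewrite nth_bs //= mulnA -xk_c.
Qed.

Lemma deg_beta i : i < 6 -> c0 * cdeg bs i = 5.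
Proof.
move=> Hi; rewrite -(s_degB S (betaB Hi)) deg_sumB sum_onA; last first.
  by move=> y Hy; case: (boolP (e (beta i) y)) => // /(crossB S) /(_ (betaB Hi)); rewrite (negbTE Hy).
rewrite (eq_bigr (fun a => (i \in Nb a : nat))); last first.
  by move=> a Ha; rewrite mem_Nb Hi (s_sym S).
rewrite (sum_A_bs (fun s => (i \in s : nat))) /cdeg sumn_big; congr (_ * _).
by apply: eq_bigr => k _; rewrite /memt; case: (nth false bs k); case: (i \in _).
Qed.

Lemma card_sum_pred (P : pred T) : #|[set y | P y]| = \sum_y (P y : nat).
Proof. by rewrite -sum1_card big_mkcond; apply: eq_bigr => y _; rewrite inE; case: (P y). Qed.

Definition lam (b1 b2 : T) := #|[set y | e y b1 && e y b2]|.
Definition sfun (b a : T) := \sum_y (e a y && (y != b)) * lam b y.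

Lemma lam_aut f b1 b2 : is_aut e f -> lam (f b1) (f b2) = lam b1 b2.
Proof.
move=> Hf; rewrite /lam -(card_imset [set y | e y b1 && e y b2] (@perm_inj _ f)).
congr (#|pred_of_set _|).
apply/setP=> y; rewrite !inE; apply/idP/imsetP.
- by move=> H; exists ((f^-1)%g y); rewrite ?inE ?permKV // -[e _ b1]Hf -[e _ b2]Hf !permKV.
- by case=> z; rewrite inE => Hz ->; rewrite !Hf.
Qed.

Lemma sfun_aut f b a : is_aut e f -> sfun (f b) (f a) = sfun b a.
Proof.
move=> Hf; rewrite /sfun (reindex_inj (@perm_inj _ f)); apply: eq_bigr => y _.
by rewrite Hf (inj_eq (@perm_inj _ f)) lam_aut.
Qed.

Lemma lam_beta i j : i < 6 -> j < 6 -> lam (beta i) (beta j) = c0 * clam bs i j.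
Proof.
move=> Hi Hj; rewrite /lam card_sum_pred sum_onA; last first.
  move=> y Hy; case: (boolP (e y (beta i))) => // /(crossB S) /(_ Hy).
  by rewrite (negbTE (betaB Hi)).
rewrite (eq_bigr (fun a => ((i \in Nb a) && (j \in Nb a) : nat))); last first.
  by move=> a Ha; rewrite !mem_Nb Hi Hj.
rewrite (sum_A_bs (fun s => ((i \in s) && (j \in s) : nat))) /clam sumn_big; congr (_ * _).
by apply: eq_bigr => k _; rewrite /memt; case: (nth false bs k); case: (i \in _); case: (j \in _).
Qed.

Lemma sfun_beta i a k : i < 6 -> a \in A -> Nb a = nth [::] trl k -> sfun (beta i) a = c0 * csl bs i k.
Proof.
move=> Hi Ha Ek; rewrite /sfun (sum_B (F := fun y => (e a y && (y != beta i)) * lam (beta i) y)); last first.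
  by move=> y Hy; rewrite (negbTE (noAA Ha Hy)).
rewrite /csl sumn_big big_distrr big_seq [RHS]big_seq; apply: eq_bigr => j; rewrite mem_iota => /andP [_ Hj].
have -> : e a (beta j) = memt j k by rewrite /memt -Ek mem_Nb Hj.
have -> : (beta j != beta i) = (j != i).
  by apply/idP/idP; apply: contra => /eqP E; apply/eqP; [rewrite E | exact: beta_inj Hj Hi E].
by rewrite lam_beta // mulnCA.
Qed.

Lemma flags_mem p : p \in flags -> [/\ p.1 < 6, p.2 < 20 & memt p.1 p.2].
Proof.
case/flatten_mapP => k; rewrite mem_iota => /andP [_ Hk] /mapP [i]; rewrite mem_filter mem_iota.
by case/andP => Hm /andP [_ Hi] ->.
Qed.

Lemma flag_csl p : p \in flags -> nth false bs p.2 ->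
  exists a, [/\ a \in A, e a (beta p.1) & sfun (beta p.1) a = c0 * csl bs p.1 p.2].
Proof.
move=> /flags_mem [Hi Hk Hm]; rewrite nth_bs // => /xk_pos [a Ha Ea].
exists a; split=> //; last exact: sfun_beta.
by have := mem_Nb a p.1; rewrite Ea Hi /= => <-.
Qed.

Lemma sconst_bs : sconst bs.
Proof.
rewrite /sconst.
set vals := [seq csl bs p.1 p.2 | p <- flags & nth false bs p.2].
have key : forall u v, u \in vals -> v \in vals -> u = v.
  move=> u v /mapP [p]; rewrite mem_filter => /andP [Hp Hf] -> /mapP [q]; rewrite mem_filter => /andP [Hq Hg] ->.
  have [a [Ha Hab Ea]] := flag_csl Hf Hp; have [a' [Ha' Hab' Ea']] := flag_csl Hg Hq.
  have [f [Hfa [E1 E2]]] := s_flag S Ha Ha' Hab Hab'.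
  have := sfun_aut (beta p.1) a Hfa; rewrite E1 E2 Ea Ea' => /eqP.
  by rewrite eqn_pmul2l ?c0_pos // => /eqP.
apply/allP => v Hv; case: vals key Hv => [//|h t] key Hv /=.
by apply/eqP; apply: key; rewrite ?inE ?eqxx.
Qed.

Lemma c0_cases : (c0 = 1 /\ forall i, i < 6 -> cdeg bs i = 5) \/ (c0 = 5 /\ forall i, i < 6 -> cdeg bs i = 1).
Proof.
have H := deg_beta; have hc := c0_pos; have h0 := H 0 isT.
have hd : 0 < cdeg bs 0 by case: (cdeg bs 0) h0 => [|d]; rewrite ?muln0.
have hle : c0 <= 5 by rewrite -h0 leq_pmulr.
have : c0 = 1 \/ c0 = 2 \/ c0 = 3 \/ c0 = 4 \/ c0 = 5 by lia.
case=> [E|[E|[E|[E|E]]]]; rewrite E in h0 H.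
- by left; split=> // i /H; lia.
- lia.
- lia.
- lia.
- by right; split=> // i /H; lia.
Qed.

Lemma noBB u v : u \notin A -> v \notin A -> ~~ e u v.
Proof. by move=> Hu Hv; apply/negP => /(crossB S) /(_ Hu); rewrite (negbTE Hv). Qed.

Lemma c5_false : (forall i, i < 6 -> cdeg bs i = 1) -> False.
Proof.
move=> Hd.
have Hdj : disj_ok bs.
  have := srchP check1 (t := bs); rewrite cats0; apply; first exact: size_bs.
  by move=> m Hm; rewrite cats0; apply: okp_drop => //; exact: size_bs.
pose X := [set v | ((v \in A) && (Nb v == Nb x0)) || e x0 v].
have Hk : forall v, v \in A -> index (Nb v) trl < 20 /\ nth false bs (index (Nb v) trl).
  move=> v Hv; have Hi : index (Nb v) trl < 20 by rewrite -trl_size index_mem Nb_trl.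
  split=> //; rewrite nth_bs // card_gt0; apply/set0Pn; exists v.
  by rewrite inE Hv andTb nth_index ?eqxx // Nb_trl.
have cl1 : forall u v, e u v -> u \in X -> v \in X.
  move=> u v Huv; rewrite !inE => /orP [/andP [Hu /eqP Eu]|Hxu].
  - have Hv := crossA S Huv Hu; have [n Hn En] := beta_onto Hv.
    apply/orP; right; rewrite -En.
    have := mem_Nb x0 n; rewrite -Eu mem_Nb Hn En Huv /=; by move=> <-.
  - have Hu := crossA S Hxu Hx0; have [n Hn En] := beta_onto Hu.
    have Hv := crossB S Huv Hu.
    apply/orP; left; rewrite Hv /=.
    have [Hk1 Hb1] := Hk v Hv; have [Hk0 Hb0] := Hk x0 Hx0.
    have E1 : nth [::] trl (index (Nb v) trl) = Nb v by rewrite nth_index ?Nb_trl.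
    have E0 : nth [::] trl (index (Nb x0) trl) = Nb x0 by rewrite nth_index ?Nb_trl.
    move: (index (Nb v) trl) (index (Nb x0) trl) Hk1 Hb1 E1 Hk0 Hb0 E0 => k1 k0 Hk1 Hb1 E1 Hk0 Hb0 E0.
    have m1 : memt n k1 by rewrite /memt E1 mem_Nb Hn En (s_sym S).
    have m0 : memt n k0 by rewrite /memt E0 mem_Nb Hn En.
    move/allP: Hdj => /(_ k1); rewrite mem_iota Hk1 => /(_ isT) /allP /(_ k0).
    rewrite mem_iota Hk0 => /(_ isT).
    rewrite Hb1 Hb0 andbT implyTb => /orP [/eqP E|/hasPn H].
    + by apply/eqP; rewrite -E1 -E0 E.
    + by move: (H n); rewrite mem_iota Hn m1 m0 => /(_ isT).
have clX : closed e X.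
  move=> u v Huv; apply/idP/idP; first exact: cl1.
  by apply: cl1; rewrite (s_sym S).
have [b Hb] : exists b, (b \notin A) && ~~ e x0 b.
  case: (boolP [exists b, (b \notin A) && ~~ e x0 b]) => [/existsP //|/existsPn Hn]; exfalso.
  have : ~: A \subset [set y | e x0 y].
    apply/subsetP => y; rewrite !inE => Hy; move: (Hn y); by rewrite Hy /= negbK.
  move/subset_leq_card; rewrite hB6 -/(deg e x0) (s_degA S Hx0); done.
case/andP: Hb => Hb1 Hb2.
have := closed_connect clX (s_conn S x0 b).
by rewrite !inE Hx0 eqxx /= (negbTE Hb1) (negbTE Hb2).
Qed.

Definition aa (k : nat) : T := odflt x0 [pick a in A | Nb a == nth [::] trl k].

Lemma aa_spec k : 0 < xk k -> aa k \in A /\ Nb (aa k) = nth [::] trl k.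
Proof.
move=> Hk; rewrite /aa; case: pickP => [a /andP [Ha /eqP E] //|H].
by exfalso; have [a Ha Ea] := xk_pos Hk; move: (H a); rewrite Ha Ea eqxx.
Qed.

Lemma c1_iso : (forall i, i < 6 -> cdeg bs i = 5) -> graph_iso e H610.
Proof.
move=> Hd.
have P5bs : P5 bs.
  have := srchP check5 (t := bs); rewrite cats0; apply; first exact: size_bs.
  by move=> m Hm; rewrite cats0; apply: okp_drop => //; exact: size_bs.
move: P5bs; rewrite /P5 sconst_bs => /hasP [[p kp] _].
rewrite /good => /andP [V1 /andP [V2 /andP [Ku /andP [Kl /andP [Ks /andP [Pu /andP [Pl Ps]]]]]]].
move/eqP: Ks => Ks; move/eqP: Ps => Ps.
have V1' : forall i j, i < 6 -> j < 10 -> ((6 + j) \in H610_nbr i) = memt (nth 0 p i) (nth 0 kp j).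
  move=> i j Hi Hj; move/allP: V1 => /(_ i); rewrite mem_iota Hi => /(_ isT) /allP /(_ j).
  by rewrite mem_iota Hj => /(_ isT) /eqP.
have Klt : forall j, j < 10 -> nth 0 kp j < 20.
  by move=> j Hj; move/allP: Kl; apply; apply: mem_nth; rewrite Ks.
have Plt : forall i, i < 6 -> nth 0 p i < 6.
  by move=> i Hi; move/allP: Pl; apply; apply: mem_nth; rewrite Ps.
have Kpos : forall j, j < 10 -> 0 < xk (nth 0 kp j).
  move=> j Hj; rewrite -nth_bs ?Klt //; move/allP: V2; apply; by rewrite mem_iota.
have Hn : forall i j, i < 16 -> j < 16 -> (j \in H610_nbr i) || (i \in H610_nbr j) = Hnat i j.
  move=> i j Hi Hj; move/allP: H610_nat_b => /(_ i); rewrite mem_iota Hi => /(_ isT) /allP /(_ j).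
  by rewrite mem_iota Hj => /(_ isT) /eqP.
pose g (i : 'I_16) := if i < 6 then beta (nth 0 p i) else aa (nth 0 kp (i - 6)).
have gB : forall i : 'I_16, i < 6 -> g i = beta (nth 0 p i) by move=> i Hi; rewrite /g Hi.
have gA : forall i : 'I_16, ~~ (i < 6) -> g i = aa (nth 0 kp (i - 6)) by move=> i Hi; rewrite /g (negbTE Hi).
have gAs : forall i : 'I_16, ~~ (i < 6) -> g i \in A /\ Nb (g i) = nth [::] trl (nth 0 kp (i - 6)).
  move=> i Hi; rewrite gA //; apply: aa_spec; apply: Kpos; have := ltn_ord i; lia.
apply: (@iso_of_inj _ _ e _ g).
- move=> i j E; apply: val_inj => /=.
  case: (boolP (i < 6)) => Hi; case: (boolP (j < 6)) => Hj.
  + move: E; rewrite !gB // => /(beta_inj (Plt _ Hi) (Plt _ Hj)) /eqP.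
    by rewrite nth_uniq ?Ps // => /eqP.
  + by have := betaB (Plt _ Hi); rewrite -gB // E (proj1 (gAs _ Hj)).
  + by have := betaB (Plt _ Hj); rewrite -gB // -E (proj1 (gAs _ Hi)).
  + have [_ Ei] := gAs _ Hi; have [_ Ej] := gAs _ Hj.
    have hi : i - 6 < 10 by have := ltn_ord i; lia.
    have hj : j - 6 < 10 by have := ltn_ord j; lia.
    move: Ei; rewrite E Ej => /eqP; rewrite nth_uniq ?trl_size ?Klt ?trl_uniq // => /eqP.
    move/eqP; rewrite nth_uniq ?Ks // => /eqP; lia.
- by rewrite card_ord -(cardsC A) hA10 hB6.
- move=> i j; rewrite /H610 Hn ?ltn_ord // /Hnat.
  case: (boolP (i < 6)) => Hi; case: (boolP (j < 6)) => Hj.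
  + by rewrite !gB //; apply/negbTE/noBB; apply: betaB; apply: Plt.
  + have [HA EA] := gAs _ Hj; rewrite (gB i) // (s_sym S).
    have hj : j - 6 < 10 by have := ltn_ord j; lia.
    have Ej : 6 + (j - 6) = j by move: Hj; rewrite -leqNgt; lia.
    rewrite (_ : e (g j) (beta (nth 0 p i)) = memt (nth 0 p i) (nth 0 kp (j - 6))); last first.
      by rewrite /memt -EA mem_Nb Plt.
    by rewrite -V1' // Ej.
  + have [HA EA] := gAs _ Hi; rewrite (gB j) //.
    have hi : i - 6 < 10 by have := ltn_ord i; lia.
    have Ei : 6 + (i - 6) = i by move: Hi; rewrite -leqNgt; lia.
    rewrite (_ : e (g i) (beta (nth 0 p j)) = memt (nth 0 p j) (nth 0 kp (i - 6))); last first.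
      by rewrite /memt -EA mem_Nb Plt.
    by rewrite -V1' // Ei.
  + by apply/negbTE/noAA; [apply: (proj1 (gAs _ Hi)) | apply: (proj1 (gAs _ Hj))].
Qed.

Lemma Hcase_sec : graph_iso e H610.
Proof.
case: c0_cases => [[_ H]|[_ H]]; first exact: c1_iso.
by exfalso; apply: c5_false.
Qed.

End Hsec.

Lemma Hcase T e A (S : @setup T e A 3 5) : #|~: A| = 6 -> #|A| = 10 -> graph_iso e H610.
Proof.
move=> h6 h10; have [x0 Hx0] := s_neA S.
exact: (Hcase_sec S h6 h10 Hx0).
Qed.

Lemma part2_core T e A dA dB (S : @setup T e A dA dB) :
  dA <= dB -> dA <= 3 -> dB <= 5 ->
     #|edges e| + 3 <= 2 * #|T| \/
     graph_iso e (Kbip 3 4) \/ graph_iso e (Kbip 3 5) \/ graph_iso e H610.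
Proof.
move=> h1 h2 h3.
have S' := setup_swap S.
have E1 := edges_count S; have E2 := edges_count S'.
have hB := deg_le_other S; have hA := deg_le_other S'; rewrite setCK in hA.
have p1 := degA_pos S.
have hT := cardsC A.
case: (leqP (#|edges e| + 3) (2 * #|T|)) => hE; first by left.
right.
have [[d1 [d2 [c1 c2]]]|[[d1 [d2 [c1 c2]]]|[d1 [d2 [c1 c2]]]]] :
  (dA = 3 /\ dB = 4 /\ #|~: A| = 3 /\ #|A| = 4) \/
  (dA = 3 /\ dB = 5 /\ #|~: A| = 3 /\ #|A| = 5) \/
  (dA = 3 /\ dB = 5 /\ #|~: A| = 6 /\ #|A| = 10).
  have hdA : dA = 1 \/ dA = 2 \/ dA = 3 by lia.
  have hdB : dB = 1 \/ dB = 2 \/ dB = 3 \/ dB = 4 \/ dB = 5 by lia.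
  case: hdA => [?|[?|?]]; case: hdB => [?|[?|[?|[?|?]]]]; subst dA dB; lia.
- by left; exact: (@Kbip_iso _ _ _ _ _ S 3 4 c1 c2 d2).
- by right; left; exact: (@Kbip_iso _ _ _ _ _ S 3 5 c1 c2 d2).
- by right; right; subst; apply: (Hcase S).
Qed.

Theorem lemma3p4 (T : finType) (e : rel T) :
  simple_graph e -> connected_graph e -> edge_transitive e ->
  ~ vertex_transitive e ->
  ((4 <= mindeg e \/ (mindeg e = 3 /\ 6 <= maxdeg e)) ->
     2 * #|T| < #|edges e| + 3) /\
  ((mindeg e <= 3 /\ maxdeg e <= 5) ->
     #|edges e| + 3 <= 2 * #|T| \/
     graph_iso e (Kbip 3 4) \/ graph_iso e (Kbip 3 5) \/ graph_iso e H610).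
Proof.
move=> sg co et nvt.
have [A [dA [dB S]]] := derive_setup sg co et nvt.
have S' := setup_swap S.
have [-> ->] := minmax_deg S.
have E1 := edges_count S; have E2 := edges_count S'.
have hT := cardsC A.
split.
- move=> H.
  have [[h1 h2]|[[h1 h2]|[h1 h2]]] : (4 <= dA /\ 4 <= dB) \/ (dA = 3 /\ 6 <= dB) \/ (dB = 3 /\ 6 <= dA).
    lia.
  + have q1 : 4 * #|A| <= #|A| * dA by rewrite mulnC leq_mul2l h1 orbT.
    have q2 : 4 * #|~: A| <= #|~: A| * dB by rewrite mulnC leq_mul2l h2 orbT.
    lia.
  + have q2 : 6 * #|~: A| <= #|~: A| * dB by rewrite mulnC leq_mul2l h2 orbT.
    subst dA; lia.
  + have q2 : 6 * #|A| <= #|A| * dA by rewrite mulnC leq_mul2l h2 orbT.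
    subst dB; lia.
- move=> [H1 H2]; case: (leqP dA dB) => h.
  + apply: (part2_core S) => //; lia.
  + apply: (part2_core S'); lia.
Qed.
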